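(* Every LSGA net is distributed.
   Context: A Petri net $N=(S,T,F,M_0,\ell)$ has disjoint $S,T$, $F:(S\times T)\cup(T\times S)\to\mathbb N$, $M_0\in\mathbb N^S$, labelling $\ell$. ${}^\bullet x(y)=F(y,x)$, $x^\bullet(y)=F(x,y)$. For a finite nonempty multiset $G$ of transitions, $M[G\rangle M'$ iff ${}^\bullet G\le M$ and $M'=M-{}^\bullet G+G^\bullet$; $t\smile u$ iff $M[\{t\}+\{u\}\rangle$ for some reachable $M$. A net is distributed iff there is a function $D$ on $S\cup T$ with (1) $s\in{}^\bullet t\Rightarrow D(t)=D(s)$ and (2) $t\smile u\Rightarrow D(t)\ne D(u)$. A component with interface is $(N,I,O)$ with $I,O\subseteq S$, $I\cap O=\emptyset$ and $o^\bullet=\emptyset$ for $o\in O$; it is sequential iff there is $Q\subseteq S\setminus(I\cup O)$ with $|{}^\bullet t\restriction Q|=|t^\bullet\restriction Q|=1$ for all $t\in T$ and $|M_0\restriction Q|=1$. For components $((S_k,T_k,F_k,M_{0k},\ell_k),I_k,O_k)$, $k\in K$, with $(S_k\cup T_k)\cap(S_l\cup T_l)=(I_k\cup O_k)\cap(I_l\cup O_l)$ and $I_k\cap I_l=\emptyset$ for $k\ne l$, the asynchronous parallel composition is $((\bigcup S_k,\bigcup T_k,\bigcup F_k,\sum M_{0k},\bigcup\ell_k),\bigcup I_k,\bigcup O_k\setminus\bigcup I_k)$. $N$ is an LSGA net iff $(N,I,O)$ equals the asynchronous parallel composition of some family of sequential components, for some $I,O$. *)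

(* Defs.v *)
From Stdlib Require Import List Arith.
Import ListNotations.

Set Implicit Arguments.

Section PetriNets.
(* Universes of place names P, transition names Tr and action labels A.
   S and T of a net are subsets of P and Tr (so S and T are disjoint). *)
Variables (P Tr A : Type).

Record net := Net {
  pl  : P -> Prop;
  tr  : Tr -> Prop;
  pre : P -> Tr -> nat;
  post : Tr -> P -> nat;
  m0  : P -> nat;
  lab : Tr -> A             (* labelling (only relevant on T) *)
}.

(* Functions are regarded as 0 outside the net's places/transitions. *)
Definition wf_net (N : net) : Prop :=
  (forall s t, pre N s t <> 0 -> pl N s /\ tr N t) /\
  (forall t s, post N t s <> 0 -> pl N s /\ tr N t) /\
  (forall s, m0 N s <> 0 -> pl N s).

Definition marking := P -> nat.

(* Finite multisets of transitions are represented by lists. *)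
Definition preG (N : net) (G : list Tr) : marking :=
  fun s => fold_right plus 0 (map (pre N s) G).
Definition postG (N : net) (G : list Tr) : marking :=
  fun s => fold_right plus 0 (map (fun t => post N t s) G).

Definition step (N : net) (M : marking) (G : list Tr) (M' : marking) : Prop :=
  G <> [] /\ (forall t, In t G -> tr N t) /\
  (forall s, preG N G s <= M s) /\
  (forall s, M' s = M s - preG N G s + postG N G s).

Inductive reachable (N : net) : marking -> Prop :=
| reach0 : reachable N (m0 N)
| reachS : forall M G M', reachable N M -> step N M G M' -> reachable N M'.

Definition concurrent (N : net) (t u : Tr) : Prop :=
  exists M M', reachable N M /\ step N M [t; u] M'.

Definition distributed (N : net) : Prop :=
  exists (L : Type) (D : P + Tr -> L),
    (forall s t, pl N s -> tr N t -> pre N s t <> 0 -> D (inr t) = D (inl s)) /\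
    (forall t u, tr N t -> tr N u -> concurrent N t u -> D (inr t) <> D (inr u)).

Record component := Comp { cnet : net; cI : P -> Prop; cO : P -> Prop }.

Definition is_component (C : component) : Prop :=
  wf_net (cnet C) /\
  (forall s, cI C s -> pl (cnet C) s) /\
  (forall s, cO C s -> pl (cnet C) s) /\
  (forall s, ~ (cI C s /\ cO C s)) /\
  (forall o t, cO C o -> pre (cnet C) o t = 0).

Definition size_one_on (Q : P -> Prop) (f : P -> nat) : Prop :=
  exists q, Q q /\ f q = 1 /\ (forall q', Q q' -> q' <> q -> f q' = 0).

Definition sequential (C : component) : Prop :=
  is_component C /\
  exists Q : P -> Prop,
    (forall s, Q s -> pl (cnet C) s /\ ~ cI C s /\ ~ cO C s) /\
    (forall t, tr (cnet C) t ->
       size_one_on Q (fun s => pre (cnet C) s t) /\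
       size_one_on Q (fun s => post (cnet C) t s)) /\
    size_one_on Q (m0 (cnet C)).

Definition composable (K : Type) (C : K -> component) : Prop :=
  forall k l, k <> l ->
    (forall s, pl (cnet (C k)) s /\ pl (cnet (C l)) s <->
               (cI (C k) s \/ cO (C k) s) /\ (cI (C l) s \/ cO (C l) s)) /\
    (forall t, ~ (tr (cnet (C k)) t /\ tr (cnet (C l)) t)) /\
    (forall s, ~ (cI (C k) s /\ cI (C l) s)).

(* (N, I, O) equals the asynchronous parallel composition of (C k)_{k in K}.
   The sum of initial markings must be well defined (finitely many nonzero
   summands at each place). *)
Definition is_async_composition (K : Type) (C : K -> component)
    (N : net) (I O : P -> Prop) : Prop :=
  (forall s, pl N s <-> exists k, pl (cnet (C k)) s) /\
  (forall t, tr N t <-> exists k, tr (cnet (C k)) t) /\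
  (forall k t, tr (cnet (C k)) t ->
      (forall s, pre N s t = pre (cnet (C k)) s t /\
                 post N t s = post (cnet (C k)) t s) /\
      lab N t = lab (cnet (C k)) t) /\
  (forall s, exists ks : list K, NoDup ks /\
      (forall k, m0 (cnet (C k)) s <> 0 -> In k ks) /\
      m0 N s = fold_right plus 0 (map (fun k => m0 (cnet (C k)) s) ks)) /\
  (forall s, I s <-> exists k, cI (C k) s) /\
  (forall s, O s <-> (exists k, cO (C k) s) /\ ~ (exists k, cI (C k) s)).

Definition LSGA (N : net) : Prop :=
  wf_net N /\
  exists (I O : P -> Prop) (K : Type) (C : K -> component),
    (forall k, sequential (C k)) /\ composable C /\
    is_async_composition C N I O.

End PetriNets.

(* Main.v *)
Require Import Defs.
From Stdlib Require Import List Arith Lia Classical FunctionalExtensionality PropExtensionality.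
Import ListNotations.

Lemma preG_cons (P Tr A : Type) (N : net P Tr A) t l s :
  preG N (t :: l) s = pre N s t + preG N l s.
Proof. reflexivity. Qed.

Lemma postG_cons (P Tr A : Type) (N : net P Tr A) t l s :
  postG N (t :: l) s = post N t s + postG N l s.
Proof. reflexivity. Qed.

Lemma preG_app (P Tr A : Type) (N : net P Tr A) l1 l2 s :
  preG N (l1 ++ l2) s = preG N l1 s + preG N l2 s.
Proof. induction l1; simpl; [reflexivity|]. rewrite !preG_cons, IHl1; lia. Qed.

Lemma postG_app (P Tr A : Type) (N : net P Tr A) l1 l2 s :
  postG N (l1 ++ l2) s = postG N l1 s + postG N l2 s.
Proof. induction l1; simpl; [reflexivity|]. rewrite !postG_cons, IHl1; lia. Qed.

Lemma preG_mid (P Tr A : Type) (N : net P Tr A) l1 t l2 s :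
  preG N (l1 ++ t :: l2) s = pre N s t + preG N (l1 ++ l2) s.
Proof. rewrite !preG_app, preG_cons; lia. Qed.

Lemma postG_mid (P Tr A : Type) (N : net P Tr A) l1 t l2 s :
  postG N (l1 ++ t :: l2) s = post N t s + postG N (l1 ++ l2) s.
Proof. rewrite !postG_app, postG_cons; lia. Qed.

Lemma preG_ge (P Tr A : Type) (N : net P Tr A) l t s :
  In t l -> pre N s t <= preG N l s.
Proof.
  induction l; simpl; [tauto|]. intros [->|H]; rewrite preG_cons; [lia|].
  specialize (IHl H); lia.
Qed.

Lemma preG_zero (P Tr A : Type) (N : net P Tr A) l s :
  (forall t, In t l -> pre N s t = 0) -> preG N l s = 0.
Proof.
  induction l; simpl; intros H; [reflexivity|]. rewrite preG_cons, H, IHl; auto.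
Qed.

Lemma postG_zero (P Tr A : Type) (N : net P Tr A) l s :
  (forall t, In t l -> post N t s = 0) -> postG N l s = 0.
Proof.
  induction l; simpl; intros H; [reflexivity|]. rewrite postG_cons, H, IHl; auto.
Qed.

Lemma sum_zero (K : Type) (f : K -> nat) ks :
  (forall x, In x ks -> f x = 0) -> fold_right plus 0 (map f ks) = 0.
Proof. induction ks; simpl; intros H; auto. rewrite H, IHks; auto. Qed.

Lemma sum_single (K : Type) (f : K -> nat) k ks :
  NoDup ks -> (forall k', k' <> k -> f k' = 0) -> (f k <> 0 -> In k ks) ->
  fold_right plus 0 (map f ks) = f k.
Proof.
  induction ks as [|a ks IH]; simpl; intros Hnd H0 Hin.
  - destruct (Nat.eq_dec (f k) 0); auto. exfalso; auto.
  - inversion Hnd; subst. destruct (classic (a = k)) as [->|Hne].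
    + rewrite sum_zero; [lia|]. intros x Hx. apply H0. intros ->. contradiction.
    + rewrite H0 by auto. simpl. apply IH; auto.
      intros Hf. destruct (Hin Hf); [congruence|auto].
Qed.

Theorem corollary4p13 (P Tr A : Type) (N : net P Tr A) :
  LSGA N -> distributed N.
Proof.
  intros [Hwf [I [O [K [C [Hseq [Hcomp Hac]]]]]]].
  destruct Hac as [Hpl [Htr [Hpp [Hm0 _]]]].
  assert (Hwfk : forall k, wf_net (cnet (C k))).
  { intro k. destruct (Hseq k) as [[H _] _]. exact H. }
  assert (HOk : forall k o t, cO (C k) o -> pre (cnet (C k)) o t = 0).
  { intro k. destruct (Hseq k) as [[_ [_ [_ [_ H]]]] _]. exact H. }
  exists (K -> Prop).
  exists (fun x => match x with
           | inl s => fun k => exists t, tr (cnet (C k)) t /\ pre (cnet (C k)) s t <> 0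
           | inr t => fun k => tr (cnet (C k)) t end).
  split.
  - intros s t Hs Ht Hst. destruct (proj1 (Htr t) Ht) as [k Hk].
    apply functional_extensionality. intro l. apply propositional_extensionality.
    destruct (proj1 (Hpp k t Hk) s) as [Hpk _].
    split.
    + intros Hl. exists t. split; auto.
      destruct (proj1 (Hpp l t Hl) s) as [Hpl' _]. congruence.
    + intros [t' [Hl Hl']]. destruct (classic (l = k)) as [->|Hne]; auto.
      exfalso. rewrite Hpk in Hst.
      destruct (proj1 (Hwfk k) s t Hst) as [Hsk _].
      destruct (proj1 (Hwfk l) s t' Hl') as [Hsl _].
      destruct (Hcomp k l (fun e => Hne (eq_sym e))) as [H1 [_ H3]].
      destruct (proj1 (H1 s) (conj Hsk Hsl)) as [[Ik|Ok] [Il|Ol]].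
      * apply (H3 s); auto.
      * apply Hl'; auto.
      * apply Hst; auto.
      * apply Hst; auto.
  - intros t u Ht Hu [M [M' [HR Hst]]] HD.
    destruct (proj1 (Htr t) Ht) as [k Htk].
    assert (Huk : tr (cnet (C k)) u).
    { pose proof (f_equal (fun f => f k) HD) as E. simpl in E. rewrite <- E. exact Htk. }
    destruct (Hseq k) as [_ [Q [HQ [HQt HQm]]]].
    assert (loc : forall q t, Q q -> tr N t -> ~ tr (cnet (C k)) t ->
                  pre N q t = 0 /\ post N t q = 0).
    { intros q t0 Hq Ht0 Hnk. destruct (proj1 (Htr t0) Ht0) as [l Hl].
      destruct (classic (l = k)) as [->|Hne]; [contradiction|].
      destruct (proj1 (Hpp l t0 Hl) q) as [E1 E2]. rewrite E1, E2.
      destruct (HQ q Hq) as [Hqk [HnI HnO]].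
      destruct (Hcomp k l (fun e => Hne (eq_sym e))) as [H1 _].
      split.
      - destruct (Nat.eq_dec (pre (cnet (C l)) q t0) 0) as [e|e]; [exact e|exfalso].
        destruct (proj1 (Hwfk l) q t0 e) as [Hql _].
        destruct (proj1 (H1 q) (conj Hqk Hql)) as [[?|?] _]; auto.
      - destruct (Nat.eq_dec (post (cnet (C l)) t0 q) 0) as [e|e]; [exact e|exfalso].
        destruct (proj1 (proj2 (Hwfk l)) t0 q e) as [Hql _].
        destruct (proj1 (H1 q) (conj Hqk Hql)) as [[?|?] _]; auto. }
    assert (two_k : forall M G, size_one_on Q M -> (forall s, preG N G s <= M s) ->
               forall l1 t l2 t', G = l1 ++ t :: l2 -> In t' (l1 ++ l2) ->
               tr (cnet (C k)) t -> tr (cnet (C k)) t' -> False).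
    { intros M0 G [q0 [Hq0 [HM1 HM0]]] Hle l1 t1 l2 t2 -> Hin H1 H2.
      destruct (proj1 (HQt t1 H1)) as [a [Ha [Ea _]]].
      destruct (proj1 (HQt t2 H2)) as [b [Hb [Eb _]]].
      destruct (proj1 (Hpp k t1 H1) a) as [Pa _].
      destruct (proj1 (Hpp k t2 H2) b) as [Pb _].
      pose proof (Hle a) as La. pose proof (Hle b) as Lb.
      rewrite preG_mid in La, Lb.
      pose proof (@preG_ge _ _ _ N _ _ a Hin) as Ga. pose proof (@preG_ge _ _ _ N _ _ b Hin) as Gb.
      destruct (classic (a = q0)) as [->|na].
      - destruct (classic (b = q0)) as [->|nb]; [lia|].
        rewrite (HM0 b Hb nb) in Lb. lia.
      - rewrite (HM0 a Ha na) in La. lia. }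
    assert (Inv : forall M, reachable N M -> size_one_on Q M).
    { intros M0 HR0. induction HR0 as [|M0 G M1 HR0 IH Hstep].
      - destruct HQm as [q0 [Hq0 [E1 E0]]].
        assert (Em : forall q, Q q -> m0 N q = m0 (cnet (C k)) q).
        { intros q Hq. destruct (Hm0 q) as [ks [Hnd [Hcov Heq]]]. rewrite Heq.
          apply (@sum_single K (fun k0 => m0 (cnet (C k0)) q)); auto.
          intros k' Hne. destruct (Nat.eq_dec (m0 (cnet (C k')) q) 0) as [e|e]; auto.
          exfalso. pose proof (proj2 (proj2 (Hwfk k')) q e) as Hql.
          destruct (HQ q Hq) as [Hqk [HnI HnO]].
          destruct (Hcomp k k' (fun e => Hne (eq_sym e))) as [H1 _].
          destruct (proj1 (H1 q) (conj Hqk Hql)) as [[?|?] _]; auto. }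
        exists q0. split; auto. split. rewrite Em; auto.
        intros q' Hq' Hne. rewrite Em; auto.
      - destruct Hstep as [Hne [HtrG [Hle Heq]]].
        destruct IH as [q0 [Hq0 [HM1 HM0]]].
        assert (IH : size_one_on Q M0) by (exists q0; auto).
        destruct (classic (exists t, In t G /\ tr (cnet (C k)) t)) as [[t1 [Hin Htk1]]|Hno].
        + destruct (in_split _ _ Hin) as [l1 [l2 EG]].
          assert (Hnot : forall t', In t' (l1 ++ l2) -> ~ tr (cnet (C k)) t').
          { intros t' Ht' Htk'. exact (two_k M0 G IH Hle l1 t1 l2 t' EG Ht' Htk1 Htk'). }
          assert (Hin' : forall t', In t' (l1 ++ l2) -> In t' G).
          { intros t' Ht'. rewrite EG. apply in_app_or in Ht'. apply in_or_app.
            destruct Ht'; [left|right; right]; auto. }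
          assert (EM : forall q, Q q -> M1 q = M0 q - pre (cnet (C k)) q t1 + post (cnet (C k)) t1 q).
          { intros q Hq. rewrite Heq, EG, preG_mid, postG_mid.
            rewrite (@preG_zero _ _ _ N (l1 ++ l2) q), (@postG_zero _ _ _ N (l1 ++ l2) q).
            - destruct (proj1 (Hpp k t1 Htk1) q) as [-> ->]. lia.
            - intros t' Ht'. apply (loc q t' Hq); auto.
            - intros t' Ht'. apply (loc q t' Hq); auto. }
          destruct (HQt t1 Htk1) as [[a [Ha [Ea Ea0]]] [b [Hb [Eb Eb0]]]].
          assert (a = q0).
          { destruct (classic (a = q0)) as [|na]; auto. exfalso.
            pose proof (Hle a) as La. rewrite EG, preG_mid in La.
            destruct (proj1 (Hpp k t1 Htk1) a) as [Pa _].
            rewrite (HM0 a Ha na) in La. lia. }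
          subst a.
          assert (Z : forall q, Q q -> M0 q - pre (cnet (C k)) q t1 = 0).
          { intros q Hq. destruct (classic (q = q0)) as [->|nq]. rewrite HM1, Ea; lia.
            rewrite HM0; auto. }
          exists b. split; auto. split.
          * rewrite EM, Z, Eb; auto.
          * intros q' Hq' nq. rewrite EM, Z, Eb0; auto.
        + assert (EM : forall q, Q q -> M1 q = M0 q).
          { intros q Hq. rewrite Heq.
            rewrite (@preG_zero _ _ _ N (G) q), (@postG_zero _ _ _ N (G) q); [lia| |];
            intros t' Ht'; apply (loc q t' Hq); auto;
            intros Htk'; apply Hno; exists t'; auto. }
          exists q0. split; auto. rewrite EM; auto. split; auto.
          intros q' Hq' nq. rewrite EM; auto. }
    destruct Hst as [_ [_ [Hle _]]].
    apply (two_k M [t; u] (Inv M HR) Hle [] t [u] u eq_refl (or_introl eq_refl) Htk Huk).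
Qed.
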